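(* For all graphs $G_1,G_2$ (for which the sums below are defined): (i) $f_\infty(G_1+_vG_2)=\max\{f_\infty(G_1),f_\infty(G_2)\}$; (ii) $f_\infty(G_1+_{vw}G_2)\le f_\infty(G_1\oplus_{vw}G_2)\le f_\infty(G_1)+f_\infty(G_2)-1$; (iii) if $G$ is a $k$-sum of $G_1$ and $G_2$ (for any $k$), then $f_\infty(G)\le f_\infty(G_1)+f_\infty(G_2)$.
   Context: A distance function on a graph $G$ is $d:E(G)\to\mathbb{R}_{\ge0}$ with $d(vw)\le\sum_i d(v_{i-1}v_i)$ for every edge $vw$ and every $v$–$w$ path. $f_\infty(G)$ is the least $k$ such that for every distance function $d$ on $G$ there is $\phi:V(G)\to\mathbb{R}^k$ with $\|\phi(v)-\phi(w)\|_\infty=d(vw)$ for all edges $vw$. A $k$-sum of $G_1$ and $G_2$ is a graph obtained by gluing $G_1$ and $G_2$ along a common clique of size $k$ (identifying the clique vertices, $G_1$ and $G_2$ otherwise disjoint) and then possibly deleting some edges of that clique. $G_1+_vG_2$ denotes $G_1\cup G_2$ where $V(G_1)\cap V(G_2)=\{v\}$. $G_1\oplus_{vw}G_2$ denotes $G_1\cup G_2$ where $V(G_1)\cap V(G_2)=\{v,w\}$ and $vw\in E(G_1)\cap E(G_2)$; $G_1+_{vw}G_2$ is $G_1\oplus_{vw}G_2$ with the edge $vw$ deleted. *)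

(* Defs.v *)
From Stdlib Require Import Reals ClassicalEpsilon.
From mathcomp Require Import all_boot.

Set Implicit Arguments.
Unset Strict Implicit.
Unset Printing Implicit Defensive.

Definition graph (T : finType) := ({set T} * rel T)%type.

Definition gV (T : finType) (G : graph T) : {set T} := G.1.
Definition gE (T : finType) (G : graph T) : rel T := G.2.

Definition is_graph (T : finType) (G : graph T) : Prop :=
  symmetric (gE G) /\ irreflexive (gE G) /\
  (forall x y, gE G x y -> x \in gV G /\ y \in gV G).

(* length of the walk x = v0, v1, ..., vn (p = [:: v1; ...; vn]) under d *)
Definition plen (T : finType) (d : T -> T -> R) (x : T) (p : seq T) : R :=
  foldr Rplus R0 (pairmap d x p).

(* d : E(G) -> R_{>=0} (edges unordered, hence symmetric on edges), with
   d(vw) <= sum of d along every v-w path of G. *)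
Definition distance_function (T : finType) (G : graph T) (d : T -> T -> R) : Prop :=
  forall x y, gE G x y ->
    Rle R0 (d x y) /\ d x y = d y x /\
    (forall p : seq T, path (gE G) x p -> last x p = y -> uniq (x :: p) ->
       Rle (d x y) (plen d x p)).

Definition linf_dist (k : nat) (a b : 'I_k -> R) : R :=
  foldr Rmax R0 [seq Rabs (Rminus (a i) (b i)) | i <- enum 'I_k].

Definition realizable_in (T : finType) (G : graph T) (k : nat) : Prop :=
  forall d, distance_function G d ->
    exists phi : T -> ('I_k -> R),
      forall x y, gE G x y -> linf_dist (phi x) (phi y) = d x y.

Definition pbool (P : Prop) : bool :=
  if excluded_middle_informative P then true else false.

(* f_infty(G): the least k such that G is realizable in (R^k, l_infty).
   (Such a k always exists for finite graphs; the fallback 0 is never used.) *)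
Definition f_inf (T : finType) (G : graph T) : nat :=
  match excluded_middle_informative (exists k, pbool (realizable_in G k)) with
  | left H => ex_minn H
  | right _ => 0
  end.

Definition gunion (T : finType) (G1 G2 : graph T) : graph T :=
  (gV G1 :|: gV G2, (fun x y => gE G1 x y || gE G2 x y)).

(* G1 +_v G2 : union, with V(G1) /\ V(G2) = {v} *)
Definition one_sum_ok (T : finType) (G1 G2 : graph T) (v : T) : Prop :=
  gV G1 :&: gV G2 = [set v].

(* G1 (+)_{vw} G2 : union, with V(G1) /\ V(G2) = {v,w}, vw an edge of both *)
Definition two_sum_ok (T : finType) (G1 G2 : graph T) (v w : T) : Prop :=
  gV G1 :&: gV G2 = [set v; w] /\ gE G1 v w /\ gE G2 v w.

(* G1 +_{vw} G2 : G1 (+)_{vw} G2 with the edge vw deleted *)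
Definition del_edge (T : finType) (G : graph T) (v w : T) : graph T :=
  (gV G, (fun x y => gE G x y && ~~ (((x == v) && (y == w)) || ((x == w) && (y == v))))).

Definition is_clique (T : finType) (G : graph T) (C : {set T}) : Prop :=
  C \subset gV G /\ forall x y, x \in C -> y \in C -> x != y -> gE G x y.

(* G is a k-sum of G1 and G2: glue along a common k-clique C (the only common
   vertices), then possibly delete some edges of that clique. *)
Definition is_k_sum (T : finType) (k : nat) (G1 G2 G : graph T) : Prop :=
  exists C : {set T},
    gV G1 :&: gV G2 = C /\ #|C| = k /\ is_clique G1 C /\ is_clique G2 C /\
    gV G = gV G1 :|: gV G2 /\
    (forall x y, gE G x y -> gE (gunion G1 G2) x y) /\
    (forall x y, gE (gunion G1 G2) x y -> ~~ ((x \in C) && (y \in C)) ->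
       gE G x y).

(* Main.v *)
Require Import Defs.
From Stdlib Require Import Reals Lra ClassicalEpsilon.
From mathcomp Require Import all_boot.

Set Implicit Arguments.
Unset Strict Implicit.
Unset Printing Implicit Defensive.



Section Aux.
Local Open Scope R_scope.

Lemma fmax_ge (A : eqType) (f : A -> R) (s : seq A) x :
  x \in s -> f x <= foldr Rmax 0 (map f s).
Proof.
elim: s => [|y s IH] //= ; rewrite in_cons => /orP [/eqP ->|H].
- apply Rmax_l.
- eapply Rle_trans; [apply IH, H| apply Rmax_r].
Qed.

Lemma fmax_le (A : eqType) (f : A -> R) (s : seq A) r :
  (forall x, x \in s -> f x <= r) -> 0 <= r -> foldr Rmax 0 (map f s) <= r.
Proof.
elim: s => [|y s IH] H0 Hr /=; first by [].
apply Rmax_lub; first by apply H0; rewrite mem_head.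
by apply IH => // x Hx; apply H0; rewrite in_cons Hx orbT.
Qed.

Lemma fmax_ge0 (A : eqType) (f : A -> R) (s : seq A) : 0 <= foldr Rmax 0 (map f s).
Proof. elim: s => [|y s IH] /=; [lra| eapply Rle_trans; [apply IH|apply Rmax_r]]. Qed.

Lemma fmax_att (A : eqType) (f : A -> R) (s : seq A) :
  foldr Rmax 0 (map f s) = 0 \/ exists2 x, x \in s & f x = foldr Rmax 0 (map f s).
Proof.
elim: s => [|y s IH] /=; first by left.
destruct (Rle_dec (f y) (foldr Rmax 0 (map f s))) as [H|H].
- rewrite Rmax_right //.
  case: IH => [->|[x Hx Hfx]]; [left|right]; auto.
  exists x => //; by rewrite in_cons Hx orbT.
- rewrite Rmax_left; last lra.
  right; exists y => //; apply mem_head.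
Qed.

Lemma linf_ge k (a b : 'I_k -> R) i : Rabs (a i - b i) <= linf_dist a b.
Proof. apply (@fmax_ge _ (fun i => Rabs (a i - b i))); apply mem_enum. Qed.

Lemma linf_ge0 k (a b : 'I_k -> R) : 0 <= linf_dist a b.
Proof. apply (@fmax_ge0 _ (fun i => Rabs (a i - b i))). Qed.

Lemma linf_le k (a b : 'I_k -> R) r :
  (forall i, Rabs (a i - b i) <= r) -> 0 <= r -> linf_dist a b <= r.
Proof. move=> H Hr; apply (@fmax_le _ (fun i => Rabs (a i - b i))) => // x _; apply H. Qed.

Lemma linf_att k (a b : 'I_k -> R) :
  linf_dist a b = 0 \/ exists i, Rabs (a i - b i) = linf_dist a b.
Proof.
case: (@fmax_att _ (fun i => Rabs (a i - b i)) (enum 'I_k)) => [H|[x _ H]];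
 [left|right; exists x]; exact H.
Qed.

Lemma linf_eq k (a b : 'I_k -> R) r :
  (forall i, Rabs (a i - b i) <= r) -> 0 <= r ->
  (r = 0 \/ exists i, r <= Rabs (a i - b i)) -> linf_dist a b = r.
Proof.
move=> H Hr Ha; apply Rle_antisym; first by apply linf_le.
case: Ha => [->|[i Hi]]; first by apply linf_ge0.
eapply Rle_trans; [apply Hi| apply linf_ge].
Qed.

End Aux.



Section B.
Local Open Scope R_scope.

Definition pmetric (T : finType) (r : T -> T -> R) :=
  (forall x, r x x = 0) /\ (forall x y, r x y = r y x) /\
  (forall x y z, r x z <= r x y + r y z).

Definition Rz (T : finType) (G : graph T) (k : nat) :=
  forall r, pmetric r -> exists phi : T -> 'I_k -> R,
    forall x y, gE G x y -> linf_dist (phi x) (phi y) = r x y.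

Lemma pm_ge0 (T : finType) (r : T -> T -> R) x y : pmetric r -> 0 <= r x y.
Proof. move=> [H0 [Hs Ht]]; have := Ht x y x; rewrite H0 (Hs y x); lra. Qed.

Lemma plen_cons (T : finType) (d : T -> T -> R) x y p :
  plen d x (y :: p) = d x y + plen d y p.
Proof. by []. Qed.

Lemma plen_cat (T : finType) (d : T -> T -> R) x p1 p2 :
  plen d x (p1 ++ p2) = plen d x p1 + plen d (last x p1) p2.
Proof.
elim: p1 x => [|y p IH] x /=; first by rewrite /plen /=; lra.
rewrite !plen_cons IH; lra.
Qed.

Lemma pm_plen (T : finType) (r : T -> T -> R) x p :
  pmetric r -> r x (last x p) <= plen r x p.
Proof.
move=> Hr; elim: p x => [|y p IH] x /=.
- rewrite /plen /= (proj1 Hr); lra.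
- rewrite plen_cons; have := IH y; have := proj2 (proj2 Hr) x y (last y p); lra.
Qed.

Lemma pm_dist (T : finType) (G : graph T) r : pmetric r -> distance_function G r.
Proof.
move=> Hr x y _; split; first by apply pm_ge0.
split; first by apply (proj1 (proj2 Hr)).
move=> p _ Hl _; rewrite -{1}Hl; by apply pm_plen.
Qed.

Lemma plen_ge0 (T : finType) (e : rel T) (d : T -> T -> R) x p :
  (forall a b, e a b -> 0 <= d a b) -> path e x p -> 0 <= plen d x p.
Proof.
move=> Hd; elim: p x => [|y p IH] x /=; first by move=> _; rewrite /plen /=; lra.
move=> /andP [Hxy Hp]; rewrite plen_cons; have := Hd _ _ Hxy; have := IH _ Hp; lra.
Qed.

Lemma split_ex (T : eqType) (s : seq T) x : x \in s -> exists s1 s2, s = s1 ++ x :: s2.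
Proof. by case/splitPr => s1 s2; exists s1, s2. Qed.

Lemma shortcut (T : finType) (e : rel T) (d : T -> T -> R) x p :
  (forall a b, e a b -> 0 <= d a b) -> path e x p ->
  exists p', [/\ path e x p', last x p' = last x p, uniq (x :: p') &
                 plen d x p' <= plen d x p].
Proof.
move=> Hd; elim: p x => [|y q IH] x /=.
  by move=> _; exists [::]; split => //; lra.
move=> /andP [Hxy Hq].
have [q' [Hq' Hl Hu Hle]] := IH y Hq.
case: (boolP (x \in y :: q')) => Hx.
- have [s1 [s2 Es]] := split_ex Hx.
  have Hps : path e x (y :: q') by rewrite /= Hxy Hq'.
  move: Hps; rewrite Es cat_path /= => /andP [Hp1 /andP [Hlx Hp2]].
  exists s2; split => //.
  + have : last x (y :: q') = last y q by rewrite /= Hl.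
    by rewrite Es last_cat /=.
  + by move: Hu; rewrite -/(uniq (y :: q')) Es cat_uniq => /and3P [_ _ ].
  + have := plen_cons d x y q'; rewrite Es plen_cat plen_cons.
    have := plen_ge0 Hd Hp1; have := Hd _ _ Hlx. rewrite plen_cons. lra.
- exists (y :: q'); split.
  + by rewrite /= Hxy Hq'.
  + by rewrite /= Hl.
  + by rewrite -/(uniq (y :: q')) /= Hx.
  + rewrite !plen_cons; lra.
Qed.

End B.



Section C.
Local Open Scope R_scope.

Lemma glb_ex (S : R -> Prop) b : S b -> (forall s, S s -> 0 <= s) ->
  {g | (forall s, S s -> g <= s) /\ (forall m, (forall s, S s -> m <= s) -> m <= g)}.
Proof.
move=> Hb H0.
have Hbd : bound (fun s => S (- s)).
  exists 0 => s Hs; have := H0 _ Hs; lra.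
have Hne : exists s, S (- s) by exists (- b); rewrite Ropp_involutive.
case: (completeness _ Hbd Hne) => l [Hub Hl].
exists (- l); split.
- move=> s Hs; have : S (- - s) by rewrite Ropp_involutive.
  move=> /Hub; lra.
- move=> m Hm; have : l <= - m; last lra.
  apply Hl => s Hs; have := Hm _ Hs; lra.
Qed.

Lemma Kmetric (T : finType) (G : graph T) d :
  symmetric (gE G) -> distance_function G d ->
  exists r, pmetric r /\ forall x y, gE G x y -> r x y = d x y.
Proof.
move=> Hsym Hdf.
set e := gE G.
have Hd0 : forall a b, e a b -> 0 <= d a b by move=> a b /Hdf [].
set B := foldr Rmax 0 [seq d p.1 p.2 | p <- enum {: T * T}].
have HB0 : 0 <= B by apply fmax_ge0.
have HBe : forall a b, d a b <= B.
  move=> a b; apply (@fmax_ge _ (fun p => d p.1 p.2) _ (a, b)); apply mem_enum.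
pose S x y s := s = B \/ exists p, [/\ path e x p, last x p = y & s = plen d x p].
have HS0 : forall x y s, S x y s -> 0 <= s.
  move=> x y s [->|[p [Hp _ ->]]] //; exact: plen_ge0 Hd0 Hp.
have Hg : forall x y, {g | (forall s, S x y s -> g <= s) /\
                           (forall m, (forall s, S x y s -> m <= s) -> m <= g)}.
  move=> x y; apply (@glb_ex (S x y) B); [by left | apply HS0].
pose g x y := sval (Hg x y).
have g_le : forall x y s, S x y s -> g x y <= s by move=> x y; exact (proj1 (svalP (Hg x y))).
have g_ge : forall x y m, (forall s, S x y s -> m <= s) -> m <= g x y
  by move=> x y; exact (proj2 (svalP (Hg x y))).
have g0 : forall x, g x x = 0.
  move=> x; apply Rle_antisym.
  - apply g_le; right; exists [::]; split => //.
  - by apply g_ge => s /HS0.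
have gtri : forall x y z, g x z <= g x y + g y z.
  move=> x y z.
  have H1 : forall s1 s2, S x y s1 -> S y z s2 -> g x z <= s1 + s2.
    move=> s1 s2 Hs1 Hs2.
    have h1 := HS0 _ _ _ Hs1; have h2 := HS0 _ _ _ Hs2.
    case: Hs1 => [E1|[p1 [Hp1 Hl1 E1]]].
      have : g x z <= B by apply g_le; left.
      lra.
    case: Hs2 => [E2|[p2 [Hp2 Hl2 E2]]].
      have : g x z <= B by apply g_le; left.
      lra.
    rewrite E1 E2 -Hl1 -plen_cat; apply g_le; right; exists (p1 ++ p2); split => //.
    - by rewrite cat_path Hp1 Hl1 Hp2.
    - by rewrite last_cat Hl1.
  have H2 : forall s1, S x y s1 -> g x z - s1 <= g y z.
    move=> s1 Hs1; apply g_ge => s2 Hs2; have := H1 _ _ Hs1 Hs2; lra.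
  have : g x z - g y z <= g x y; last lra.
  apply g_ge => s1 Hs1; have := H2 _ Hs1; lra.
have gedge : forall x y, e x y -> g x y = d x y.
  move=> x y Hxy; apply Rle_antisym.
  - have -> : d x y = plen d x [:: y] by rewrite plen_cons /plen /=; lra.
    apply g_le; right; exists [:: y]; split => //=; by rewrite Hxy.
  - apply g_ge => s [->|[p [Hp Hl ->]]]; first by apply HBe.
    have [p' [Hp' Hl' Hu' Hle']] := shortcut Hd0 Hp.
    have [_ [_ H]] := Hdf x y Hxy.
    have := H p' Hp' (etrans Hl' Hl) Hu'; lra.
exists (fun x y => (g x y + g y x) / 2); split; [split; [|split]|].
- move=> x; rewrite g0; lra.
- move=> x y; lra.
- move=> x y z; have := gtri x y z; have := gtri z y x; lra.
- move=> x y Hxy; rewrite gedge // gedge; last by rewrite /e Hsym.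
  have [_ [-> _]] := Hdf x y Hxy; lra.
Qed.

End C.



Section D.
Local Open Scope R_scope.

Lemma linf_ext k (a b a' b' : 'I_k -> R) :
  (forall i, Rabs (a i - b i) = Rabs (a' i - b' i)) -> linf_dist a b = linf_dist a' b'.
Proof.
move=> H; rewrite /linf_dist; congr foldr; apply eq_map => i; apply H.
Qed.

Lemma frechet (T : finType) (G : graph T) : Rz G #|T|.
Proof.
move=> r Hr; exists (fun x t => r x (enum_val t)) => x y _.
have [H0 [Hs Ht]] := Hr.
apply linf_eq; last 1 first.
- right; exists (enum_rank y); rewrite enum_rankK H0 Rminus_0_r; apply RRle_abs.
- move=> i; apply Rabs_le; move: (enum_val i) => t; have := Ht x y t; have := Ht y x t.
  rewrite (Hs y x); split; lra.
- exact: pm_ge0 Hr.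
Qed.

Lemma bridge (T : finType) (G : graph T) k :
  symmetric (gE G) -> (realizable_in G k <-> Rz G k).
Proof.
move=> Hsym; split.
- move=> H r Hr; apply H; exact: pm_dist.
- move=> H d Hd; have [r [Hr Hrd]] := Kmetric Hsym Hd.
  have [phi Hphi] := H r Hr; exists phi => x y Hxy; rewrite Hphi // Hrd //.
Qed.

Lemma f_inf_spec (T : finType) (G : graph T) :
  symmetric (gE G) -> Rz G (f_inf G) /\ (forall k, Rz G k -> (f_inf G <= k)%N).
Proof.
move=> Hsym.
have pbP : forall P, pbool P -> P.
  by move=> P; rewrite /pbool; case: excluded_middle_informative.
have Pbp : forall P, P -> pbool P.
  by move=> P HP; rewrite /pbool; case: excluded_middle_informative.
rewrite /f_inf; case: excluded_middle_informative => [Hex|Hn].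
- case: ex_minnP => m Hm Hmin; split.
  + by apply/bridge => //; apply pbP.
  + move=> k Hk; apply Hmin, Pbp; exact/bridge.
- exfalso; apply Hn; exists #|T|; apply Pbp; apply/bridge => //; apply frechet.
Qed.

Lemma Rz_sub (T : finType) (G H : graph T) k :
  (forall x y, gE G x y -> gE H x y) -> Rz H k -> Rz G k.
Proof.
move=> Hs HH r Hr; have [phi Hphi] := HH r Hr; exists phi => x y Hxy; exact: Hphi (Hs _ _ Hxy).
Qed.

Lemma Rz_pad (T : finType) (G : graph T) k m : Rz G k -> (k <= m)%N -> Rz G m.
Proof.
move=> HG Hkm r Hr; have [phi Hphi] := HG r Hr.
exists (fun x (i : 'I_m) => match ltnP i k with
   | LtnNotGeq H => phi x (Ordinal H) | GeqNotLtn _ => 0 end) => x y Hxy.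
rewrite -(Hphi x y Hxy); apply linf_eq.
- move=> i; case: ltnP => H; first by apply linf_ge.
  rewrite Rminus_0_r Rabs_R0; apply linf_ge0.
- apply linf_ge0.
- case: (linf_att (phi x) (phi y)) => [->|[i Hi]]; [by left| right].
  exists (widen_ord Hkm i); case: ltnP => H.
  + rewrite -Hi; have -> : Ordinal H = i by apply val_inj.
    apply Rle_refl.
  + by exfalso; move: H; rewrite /= leqNgt ltn_ord.
Qed.

Lemma Rz0 (T : finType) (G : graph T) x y : gE G x y -> x != y -> ~ Rz G 0.
Proof.
move=> Hxy Hne H.
have Hr : pmetric (fun a b : T => if a == b then 0 else 1).
  split; [|split].
  - by move=> a; rewrite eqxx.
  - by move=> a b; rewrite eq_sym.
  - move=> a b c; case: (eqVneq a b) => [->|Hab].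
      case: (_ == _); lra.
    case: (_ == _); case: (_ == _); lra.
have [phi Hphi] := H _ Hr.
have := Hphi x y Hxy; rewrite (negbTE Hne) /linf_dist.
have -> : enum 'I_0 = [::] by apply size0nil; rewrite size_enum_ord.
simpl; lra.
Qed.

End D.



Section E.
Local Open Scope R_scope.

Definition catv a b (u : 'I_a -> R) (w : 'I_b -> R) : 'I_(a + b) -> R :=
  fun k => match split k with inl l => u l | inr m => w m end.

Lemma linf_cat a b (u u' : 'I_a -> R) (w w' : 'I_b -> R) :
  linf_dist (catv u w) (catv u' w') = Rmax (linf_dist u u') (linf_dist w w').
Proof.
apply linf_eq.
- move=> k; rewrite /catv; case: split => l.
  + eapply Rle_trans; [apply linf_ge|apply Rmax_l].
  + eapply Rle_trans; [apply linf_ge|apply Rmax_r].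
- eapply Rle_trans; [apply linf_ge0|apply Rmax_l].
- destruct (Rle_dec (linf_dist u u') (linf_dist w w')) as [H|H].
  + rewrite Rmax_right //.
    case: (linf_att w w') => [->|[i Hi]]; [by left|right].
    exists (unsplit (inr i)); rewrite /catv unsplitK Hi; apply Rle_refl.
  + rewrite Rmax_left; last lra.
    case: (linf_att u u') => [->|[i Hi]]; [by left|right].
    exists (unsplit (inl i)); rewrite /catv unsplitK Hi; apply Rle_refl.
Qed.

Lemma sym_of (T : finType) (G : graph T) : is_graph G -> symmetric (gE G).
Proof. by case. Qed.

Lemma sym_union (T : finType) (G1 G2 : graph T) :
  is_graph G1 -> is_graph G2 -> symmetric (gE (gunion G1 G2)).
Proof.
move=> [H1 _] [H2 _] x y; by rewrite /gunion /gE /= -!/(gE _) H1 H2.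
Qed.

Lemma one_sum_Rz (T : finType) (G1 G2 : graph T) v k :
  is_graph G1 -> is_graph G2 -> one_sum_ok G1 G2 v ->
  Rz G1 k -> Rz G2 k -> Rz (gunion G1 G2) k.
Proof.
move=> [_ [_ HV1]] [_ [_ HV2]] Hv R1 R2 r Hr.
have [phi1 H1] := R1 r Hr; have [phi2 H2] := R2 r Hr.
exists (fun x i => if x \in gV G1 then phi1 x i - phi1 v i else phi2 x i - phi2 v i).
have E2 : forall x i, x \in gV G2 ->
   (if x \in gV G1 then phi1 x i - phi1 v i else phi2 x i - phi2 v i) = phi2 x i - phi2 v i.
  move=> x i Hx2; case: ifP => // Hx1.
  have : x \in gV G1 :&: gV G2 by rewrite inE Hx1 Hx2.
  rewrite Hv inE => /eqP ->; lra.
move=> x y /orP [Hxy|Hxy].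
- have [Hx Hy] := HV1 _ _ Hxy; rewrite -H1 //; apply linf_ext => i.
  rewrite Hx Hy; f_equal; ring.
- have [Hx Hy] := HV2 _ _ Hxy; rewrite -H2 //; apply linf_ext => i.
  rewrite E2 // E2 //; f_equal; ring.
Qed.

End E.



Section F.
Local Open Scope R_scope.
Variable T : finType.

Definition fmin (F : T -> R) (init : R) (s : seq T) :=
  foldr (fun c acc => Rmin (F c) acc) init s.

Lemma fmin_le F i s c : c \in s -> fmin F i s <= F c.
Proof.
elim: s => [|y s IH] //=; rewrite in_cons => /orP [/eqP ->|H]; first by apply Rmin_l.
eapply Rle_trans; [apply Rmin_r| exact: IH].
Qed.

Lemma fmin_ge F i s L : L <= i -> (forall c, c \in s -> L <= F c) -> L <= fmin F i s.
Proof.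
move=> Hi; elim: s => [|y s IH] H //=.
apply Rmin_glb; first by apply H; rewrite mem_head.
by apply IH => c Hc; apply H; rewrite in_cons Hc orbT.
Qed.

Lemma fmin_lip (F : T -> T -> R) (i : T -> R) s x y d :
  i x <= i y + d -> (forall c, F x c <= F y c + d) ->
  fmin (F x) (i x) s <= fmin (F y) (i y) s + d.
Proof.
move=> Hi HF; elim: s => [|c s IH] //=.
have := HF c; unfold Rmin; do 2 destruct Rle_dec; lra.
Qed.

Definition ext (r : T -> T -> R) (C : {set T}) (g : T -> R) (x : T) : R :=
  fmin (fun c => g c + r x c)
       (match [pick c in C] with Some c0 => g c0 + r x c0 | None => 0 end) (enum C).

Lemma ext_lip r C g x y : pmetric r -> ext r C g x <= ext r C g y + r x y.
Proof.
move=> [H0 [Hs Ht]].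
apply (@fmin_lip (fun x c => g c + r x c)
  (fun x => match [pick c in C] with Some c0 => g c0 + r x c0 | None => 0 end)).
- case: pickP => [c _|_]; [have := Ht x y c; lra| have := pm_ge0 x y (conj H0 (conj Hs Ht)); lra].
- move=> c; have := Ht x y c; lra.
Qed.

Lemma ext_agree r (C : {set T}) g x c : pmetric r ->
  (forall c c', c \in C -> c' \in C -> g c - g c' <= r c c') ->
  c \in C -> Rabs (ext r C g x - g c) <= r x c.
Proof.
move=> [H0 [Hs Ht]] Hg Hc; apply Rabs_le; split.
- have : g c - r x c <= ext r C g x; last lra.
  apply fmin_ge.
  + case: pickP => [c0 Hc0|H]; last by rewrite H in Hc.
    have := Hg _ _ Hc Hc0; have := Ht c x c0; rewrite (Hs c x); lra.
  + move=> c1; rewrite mem_enum => Hc1.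
    have := Hg _ _ Hc Hc1; have := Ht c x c1; rewrite (Hs c x); lra.
- have := @fmin_le (fun c => g c + r x c)
    (match [pick c in C] with Some c0 => g c0 + r x c0 | None => 0 end) (enum C) c.
  rewrite mem_enum /ext => H; have := H Hc; lra.
Qed.

Definition Pside a (r : T -> T -> R) (V1 C : {set T}) (phi1 : T -> 'I_a -> R) x l :=
  if x \in V1 then phi1 x l else ext r C (fun c => phi1 c l) x.

Lemma Pside_lip a r (G1 G2 : graph T) (phi1 : T -> 'I_a -> R) x y l :
  pmetric r -> is_graph G2 -> is_clique G1 (gV G1 :&: gV G2) ->
  (forall x y, gE G1 x y -> linf_dist (phi1 x) (phi1 y) = r x y) ->
  gE G2 x y ->
  Rabs (Pside r (gV G1) (gV G1 :&: gV G2) phi1 x l -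
        Pside r (gV G1) (gV G1 :&: gV G2) phi1 y l) <= r x y.
Proof.
move=> Hr [Hs2 [Hirr2 HV2]] [_ Hcl] Hphi Hxy.
have [Hx2 Hy2] := HV2 _ _ Hxy.
have Hg : forall c c', c \in gV G1 :&: gV G2 -> c' \in gV G1 :&: gV G2 ->
          phi1 c l - phi1 c' l <= r c c'.
  move=> c c' Hc Hc'; case: (eqVneq c c') => [->|Hne].
  - rewrite (proj1 Hr); lra.
  - rewrite -Hphi; last by apply Hcl.
    have := linf_ge (phi1 c) (phi1 c') l; have := Rle_abs (phi1 c l - phi1 c' l); lra.
have Hsr := proj1 (proj2 Hr).
rewrite /Pside; case: ifP => Hx1; case: ifP => Hy1.
- rewrite -Hphi; first by apply linf_ge.
  apply Hcl; rewrite ?inE ?Hx1 ?Hy1 ?Hx2 ?Hy2 //.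
  by apply/eqP => E; move: Hxy; rewrite E Hirr2.
- rewrite Rabs_minus_sym (Hsr x y); apply (@ext_agree r _ (fun c => phi1 c l) y x) => //.
  by rewrite inE Hx1 Hx2.
- apply (@ext_agree r _ (fun c => phi1 c l) x y) => //; by rewrite inE Hy1 Hy2.
- apply Rabs_le; have := @ext_lip r (gV G1 :&: gV G2) (fun c => phi1 c l) x y Hr;
  have := @ext_lip r (gV G1 :&: gV G2) (fun c => phi1 c l) y x Hr; rewrite (Hsr y x).
  split; lra.
Qed.

End F.

Lemma ksum_Rz (T : finType) (k a b : nat) (G1 G2 G : graph T) :
  is_graph G1 -> is_graph G2 -> is_k_sum k G1 G2 G ->
  Rz G1 a -> Rz G2 b -> Rz G (a + b).
Proof.
move=> HG1 HG2 [C [HC [_ [Hcl1 [Hcl2 [_ [HGE _]]]]]]] R1 R2 r Hr.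
have [phi1 H1] := R1 r Hr; have [phi2 H2] := R2 r Hr.
have Hcl1' : is_clique G1 (gV G1 :&: gV G2) by rewrite HC.
have Hcl2' : is_clique G2 (gV G2 :&: gV G1) by rewrite setIC HC.
exists (fun x => catv (Pside r (gV G1) (gV G1 :&: gV G2) phi1 x)
                      (Pside r (gV G2) (gV G2 :&: gV G1) phi2 x)) => x y Hxy.
rewrite linf_cat.
have [_ [_ HV1]] := HG1; have [_ [_ HV2]] := HG2.
have Hr0 := pm_ge0 x y Hr.
case/orP: (HGE _ _ Hxy) => Hxy'.
- have [Hx Hy] := HV1 _ _ Hxy'.
  have -> : linf_dist (Pside r (gV G1) (gV G1 :&: gV G2) phi1 x)
                      (Pside r (gV G1) (gV G1 :&: gV G2) phi1 y) = r x y.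
    rewrite -H1 //; apply linf_ext => l; by rewrite /Pside Hx Hy.
  apply Rmax_left; apply linf_le => // l.
  exact: (Pside_lip l Hr HG1 Hcl2' H2 Hxy').
- have [Hx Hy] := HV2 _ _ Hxy'.
  have -> : linf_dist (Pside r (gV G2) (gV G2 :&: gV G1) phi2 x)
                      (Pside r (gV G2) (gV G2 :&: gV G1) phi2 y) = r x y.
    rewrite -H2 //; apply linf_ext => l; by rewrite /Pside Hx Hy.
  apply Rmax_right; apply linf_le => // l.
  exact: (Pside_lip l Hr HG2 Hcl1' H1 Hxy').
Qed.



Section G.
Local Open Scope R_scope.

Lemma normalize (T : finType) (G : graph T) n r (phi : T -> 'I_n.+1 -> R) v w :
  pmetric r -> symmetric (gE G) -> gE G v w ->
  (forall x y, gE G x y -> linf_dist (phi x) (phi y) = r x y) ->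
  exists psi : T -> 'I_n.+1 -> R, exists i,
    [/\ forall x y, gE G x y -> linf_dist (psi x) (psi y) = r x y,
        forall l, psi v l = 0, psi w i = r v w &
        forall l, Rabs (psi w l) <= r v w].
Proof.
move=> Hr Hsym Hvw Hphi.
have [i Hi] : exists i, Rabs (phi v i - phi w i) = r v w.
  case: (linf_att (phi v) (phi w)) => [H0|[i0 Hi0]].
  2: by exists i0; rewrite Hi0; apply Hphi.
  exists ord0; apply Rle_antisym.
  - rewrite -Hphi //; apply linf_ge.
  - rewrite -Hphi // H0; apply Rabs_pos.
pose s := if Rle_dec 0 (phi w i - phi v i) then 1 else -1.
have Hs : Rabs s = 1 by rewrite /s; destruct Rle_dec; rewrite ?Rabs_Ropp Rabs_R1.
exists (fun x l => s * (phi x l - phi v l)), i; split.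
- move=> x y Hxy; rewrite -Hphi //; apply linf_ext => l.
  have -> : s * (phi x l - phi v l) - s * (phi y l - phi v l) = s * (phi x l - phi y l) by ring.
  by rewrite Rabs_mult Hs Rmult_1_l.
- move=> l; ring.
- rewrite -Hi /s Rabs_minus_sym; destruct Rle_dec as [H|H].
  + rewrite Rabs_right /=; lra.
  + rewrite Rabs_left /=; lra.
- move=> l; rewrite Rabs_mult Hs Rmult_1_l.
  have Hwv : gE G w v by rewrite Hsym.
  rewrite (proj1 (proj2 Hr) v w) -Hphi //; apply linf_ge.
Qed.

Definition cl (D t : R) := Rmax 0 (Rmin t D).
Definition coef (D t z : R) := cl D t / D * z.

Lemma cl_lip D t t' : Rabs (cl D t - cl D t') <= Rabs (t - t').
Proof.
rewrite /cl; unfold Rmax, Rmin; repeat destruct Rle_dec;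
 unfold Rabs; repeat destruct Rcase_abs; lra.
Qed.

Lemma coef_lip D t t' z : Rabs z <= D ->
  Rabs (coef D t z - coef D t' z) <= Rabs (t - t').
Proof.
move=> Hz; rewrite /coef.
have HD : 0 <= D by have := Rabs_pos z; lra.
case: (Req_dec D 0) => HD0.
- have -> : z = 0 by move: Hz; rewrite HD0; have := Rabs_pos z;
     unfold Rabs; destruct Rcase_abs; lra.
  rewrite !Rmult_0_r Rminus_0_r Rabs_R0; apply Rabs_pos.
- set q := z / D.
  have Hq : Rabs q <= 1.
    rewrite /q /Rdiv Rabs_mult Rabs_inv (Rabs_right D); last lra.
    apply (Rmult_le_reg_r D); first lra.
    rewrite Rmult_assoc Rinv_l //; lra.
  have -> : cl D t / D * z - cl D t' / D * z = (cl D t - cl D t') * q by rewrite /q; field.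
  rewrite Rabs_mult.
  eapply Rle_trans; last apply cl_lip.
  rewrite -[X in _ <= X]Rmult_1_r; apply Rmult_le_compat_l; [apply Rabs_pos|exact Hq].
Qed.

Lemma coef0 D z : 0 <= D -> coef D 0 z = 0.
Proof.
move=> HD; rewrite /coef /cl Rmin_left // Rmax_left; last lra.
rewrite /Rdiv; ring.
Qed.

Lemma coefD D z : Rabs z <= D -> coef D D z = z.
Proof.
move=> Hz; have HD : 0 <= D by have := Rabs_pos z; lra.
rewrite /coef /cl Rmin_left; last lra. rewrite Rmax_right //.
case: (Req_dec D 0) => HD0.
- have -> : z = 0 by move: Hz; rewrite HD0; have := Rabs_pos z;
     unfold Rabs; destruct Rcase_abs; lra.
  ring.
- field; lra.
Qed.

End G.



Section H.
Local Open Scope R_scope.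

Lemma two_sum_Rz (T : finType) (G1 G2 : graph T) v w a b :
  is_graph G1 -> is_graph G2 -> two_sum_ok G1 G2 v w ->
  Rz G1 a.+1 -> Rz G2 b.+1 -> Rz (gunion G1 G2) (a.+1 + b).
Proof.
move=> HG1 HG2 [HV [Hvw1 Hvw2]] R1 R2 r Hr.
have [Hs1 [_ HV1]] := HG1; have [Hs2 [_ HV2]] := HG2.
have [phi1 H1] := R1 r Hr; have [phi2 H2] := R2 r Hr.
have [p1 [i [P1 P1v P1w P1b]]] := normalize Hr Hs1 Hvw1 H1.
have [p2 [j [P2 P2v P2w P2b]]] := normalize Hr Hs2 Hvw2 H2.
set D := r v w.
have HD : 0 <= D by apply pm_ge0.
pose F1 x := catv (p1 x) (fun m => coef D (p1 x i) (p2 w (lift j m))).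
pose F2 x := catv (fun l => if l == i then p2 x j else coef D (p2 x j) (p1 w l))
                  (fun m => p2 x (lift j m)).
have Ev : forall k, F1 v k = F2 v k.
  move=> k; rewrite /F1 /F2 /catv; case: split => [l|m].
  - rewrite P1v; case: eqP => _; rewrite P2v ?coef0 //.
  - by rewrite P1v P2v coef0.
have Ew : forall k, F1 w k = F2 w k.
  move=> k; rewrite /F1 /F2 /catv; case: split => [l|m].
  - case: eqP => [->|_]; first by rewrite P1w P2w.
    by rewrite P2w coefD.
  - by rewrite P1w coefD.
have E2 : forall x k, x \in gV G2 -> (if x \in gV G1 then F1 x k else F2 x k) = F2 x k.
  move=> x k Hx2; case: ifP => // Hx1.
  have : x \in gV G1 :&: gV G2 by rewrite inE Hx1 Hx2.
  by rewrite HV !inE => /orP [] /eqP ->.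
exists (fun x k => if x \in gV G1 then F1 x k else F2 x k) => x y /orP [Hxy|Hxy].
- have [Hx Hy] := HV1 _ _ Hxy.
  rewrite (@linf_ext _ _ _ (F1 x) (F1 y)); last by move=> k; rewrite Hx Hy.
  rewrite /F1 linf_cat P1 //; apply Rmax_left, linf_le; last by apply pm_ge0.
  move=> m; eapply Rle_trans; first by apply coef_lip.
  by rewrite -(P1 x y Hxy); apply linf_ge.
- have [Hx Hy] := HV2 _ _ Hxy.
  rewrite (@linf_ext _ _ _ (F2 x) (F2 y)); last by move=> k; rewrite E2 // E2.
  have Hb : forall m, Rabs (p2 x m - p2 y m) <= r x y
    by move=> m; rewrite -(P2 x y Hxy); apply linf_ge.
  apply linf_eq; last 1 first.
  + case: (linf_att (p2 x) (p2 y)) => [H0|[mm Hmm]]; first by left; rewrite -(P2 x y Hxy).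
    right; rewrite -(P2 x y Hxy) -Hmm.
    case: (unliftP j mm) => [m ->|->].
    * by exists (unsplit (inr m)); rewrite /F2 /catv unsplitK; apply Rle_refl.
    * by exists (unsplit (inl i)); rewrite /F2 /catv unsplitK eqxx; apply Rle_refl.
  + move=> k; rewrite /F2 /catv; case: split => [l|m]; last by apply Hb.
    case: eqP => _; first by apply Hb.
    eapply Rle_trans; first by apply coef_lip.
    by apply Hb.
  + by apply pm_ge0.
Qed.

End H.



Lemma sym_del (T : finType) (U : graph T) v w :
  symmetric (gE U) -> symmetric (gE (del_edge U v w)).
Proof.
move=> sU x y; rewrite /del_edge /gE /= -!/(gE U) sU.
by rewrite [(y == v) && _]andbC [(y == w) && _]andbC orbC.
Qed.

Theorem mainTheorem10 :
  (forall (T : finType) (G1 G2 : graph T) (v : T),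
     is_graph G1 -> is_graph G2 -> one_sum_ok G1 G2 v ->
     f_inf (gunion G1 G2) = maxn (f_inf G1) (f_inf G2)) /\
  (forall (T : finType) (G1 G2 : graph T) (v w : T),
     is_graph G1 -> is_graph G2 -> two_sum_ok G1 G2 v w ->
     f_inf (del_edge (gunion G1 G2) v w) <= f_inf (gunion G1 G2) /\
     f_inf (gunion G1 G2) <= f_inf G1 + f_inf G2 - 1) /\
  (forall (T : finType) (k : nat) (G1 G2 G : graph T),
     is_graph G1 -> is_graph G2 -> is_graph G -> is_k_sum k G1 G2 G ->
     f_inf G <= f_inf G1 + f_inf G2).
Proof.
split; [|split].
- move=> T G1 G2 v HG1 HG2 Hv.
  have sU := sym_union HG1 HG2.
  have [RU minU] := f_inf_spec sU.
  have [R1 min1] := f_inf_spec (sym_of HG1).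
  have [R2 min2] := f_inf_spec (sym_of HG2).
  apply/eqP; rewrite eqn_leq; apply/andP; split.
  + apply minU; apply: (one_sum_Rz HG1 HG2 Hv).
    * exact: Rz_pad R1 (leq_maxl _ _).
    * exact: Rz_pad R2 (leq_maxr _ _).
  + rewrite geq_max; apply/andP; split.
    * apply min1; apply: Rz_sub RU => x y H; by rewrite /gunion /gE /= -!/(gE _) H.
    * apply min2; apply: Rz_sub RU => x y H; by rewrite /gunion /gE /= -!/(gE _) H orbT.
- move=> T G1 G2 v w HG1 HG2 H2s.
  have sU := sym_union HG1 HG2.
  have [RU minU] := f_inf_spec sU.
  have [Rd mind] := f_inf_spec (sym_del v w sU).
  split.
  + apply mind; apply: Rz_sub RU => x y /andP [] //.
  + have [R1 _] := f_inf_spec (sym_of HG1).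
    have [R2 _] := f_inf_spec (sym_of HG2).
    have [_ [Hvw1 Hvw2]] := H2s.
    have Hne : v != w.
      apply/eqP => E; move: Hvw1; rewrite E; by have [_ [-> _]] := HG1.
    move: R1 R2; case: (f_inf G1) => [|a] R1; first by case: (Rz0 Hvw1 Hne R1).
    case: (f_inf G2) => [|b] R2; first by case: (Rz0 Hvw2 Hne R2).
    rewrite addnS subn1 /=.
    apply minU; exact: two_sum_Rz HG1 HG2 H2s R1 R2.
- move=> T k G1 G2 G HG1 HG2 HG Hk.
  have [_ minG] := f_inf_spec (sym_of HG).
  have [R1 _] := f_inf_spec (sym_of HG1).
  have [R2 _] := f_inf_spec (sym_of HG2).
  apply minG; exact: ksum_Rz HG1 HG2 Hk R1 R2.
Qed.
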